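(* Let $p\in\mathbb{C}[z_1,\dots,z_d]$ have total degree $n$ and no zeros in $\mathbb{D}^d$, and suppose $p$ vanishes to order $M$ at $u=(1,\dots,1)$, so that $p(u-\zeta)=\sum_{j=M}^nP_j(\zeta)$ with each $P_j$ a homogeneous polynomial of degree $j$ and $P_M\neq0$. Then $P_M$ has no zeros in $\{\zeta\in\mathbb{C}:\mathrm{Re}\,\zeta>0\}^d$.
   Context: $\mathbb{D}$ denotes the open unit disk in $\mathbb{C}$. *)

(* Defs.v *)
From mathcomp Require Import all_boot all_algebra.
From mathcomp Require Import complex.
From mathcomp Require Import Rstruct.
From mathcomp.multinomials Require Import mpoly.

Set Implicit Arguments.
Unset Strict Implicit.
Unset Printing Implicit Defensive.
Import GRing.Theory Num.Theory.
Local Open Scope ring_scope.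

Notation CC := (complex Rdefinitions.R).

Definition shift_u (d : nat) (p : {mpoly CC[d]}) : {mpoly CC[d]} :=
  p \mPo [tuple (1 - 'X_i) | i < d].

Definition hpart (d j : nat) (q : {mpoly CC[d]}) : {mpoly CC[d]} :=
  pihomog mdeg j q.

Definition in_polydisk (d : nat) (z : 'I_d -> CC) : Prop :=
  forall i, `|z i| < 1.

Definition in_right_halfplane (d : nat) (z : 'I_d -> CC) : Prop :=
  forall i, 0 < complex.Re (z i).

(* Main.v *)
Require Import Defs.
From mathcomp Require Import all_boot all_algebra.
From mathcomp Require Import complex.
From mathcomp Require Import Rstruct.
From mathcomp.multinomials Require Import mpoly.
From mathcomp Require Import all_order ring.
Import Order.TTheory GRing.Theory Num.Theory.
Local Open Scope ring_scope.

Lemma prod_coef_bound (C : numClosedFieldType) (rho : C) (rs : seq C) :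
  0 < rho -> all (fun z => rho <= `|z|) rs ->
  forall k, `|(\prod_(z <- rs) ('X - z%:P))`_k| * rho ^+ k
            <= 2 ^+ size rs * `|(\prod_(z <- rs) ('X - z%:P))`_0|.
Proof.
move=> rho0; elim: rs => [|z rs IH] /=.
  move=> _ k; rewrite big_nil !coef1 expr0 mul1r.
  case: k => [|k] /=; first by rewrite expr0 mulr1.
  by rewrite normr0 mul0r.
move=> /andP[hz hall] k; have IHk := IH hall.
rewrite big_cons.
set Q := \prod_(_ <- rs) _.
rewrite mulrBl !coefB !coefXM !coefCM /= sub0r normrN normrM.
have Hz0 : 0 <= `|z| by [].
have H2 : 0 <= 2 ^+ size rs :> C by rewrite exprn_ge0 // ler0n.
case: k => [|k] /=.
  rewrite sub0r normrN normrM expr0 mulr1 -[X in X <= _]mul1r ler_wpM2r //.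
    by rewrite mulr_ge0.
  by rewrite exprn_ege1 // ler1n.
apply: (le_trans (ler_wpM2r _ (ler_normB _ _))).
  by rewrite exprn_ge0 // ltW.
rewrite mulrDl normrM.
have h1 : `|Q`_k| * rho ^+ k.+1 <= 2 ^+ size rs * `|Q`_0| * `|z|.
  rewrite exprSr mulrA.
  apply: le_trans (ler_wpM2r (ltW rho0) (IHk k)) _.
  by apply: ler_wpM2l => //; rewrite mulr_ge0.
have h2 : `|z| * `|Q`_k.+1| * rho ^+ k.+1 <= `|z| * (2 ^+ size rs * `|Q`_0|).
  by rewrite -mulrA ler_wpM2l //; apply: IHk.
have -> : 2 ^+ (size rs).+1 * (`|z| * `|Q`_0|) = 2 ^+ size rs * `|Q`_0| * `|z| + `|z| * (2 ^+ size rs * `|Q`_0|).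
  by rewrite exprS; ring.
by apply: lerD.
Qed.

Lemma root_bound (C : numClosedFieldType) (h : {poly C}) (rho : C) :
  0 < rho -> (forall r, root h r -> rho <= `|r|) ->
  forall k, `|h`_k| * rho ^+ k <= 2 ^+ size h * `|h`_0|.
Proof.
move=> rho0 hr k.
have [->|hn0] := eqVneq h 0.
  by rewrite !coef0 normr0 !mul0r mulr0.
have [rs hE] := closed_field_poly_normal h.
have hall : all (fun z => rho <= `|z|) rs.
  apply/allP => z zin; apply: hr; rewrite hE rootZ ?lead_coef_eq0 //.
  by rewrite root_prod_XsubC.
have := @prod_coef_bound _ _ _ rho0 hall k.
rewrite hE !coefZ !normrM => H.
have lc0 : 0 <= `|lead_coef h| by [].
rewrite -mulrA; apply: le_trans (ler_wpM2l lc0 H) _.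
rewrite mulrCA; apply: ler_wpM2r; first by rewrite mulr_ge0.
apply: ler_weXn2l; first by rewrite ler1n.
by rewrite size_scale ?lead_coef_eq0 // size_prod_XsubC.
Qed.
Lemma enc_inj (K d : nat) (f g : 'I_d -> nat) :
  (forall i, f i < K)%N -> (forall i, g i < K)%N ->
  (\sum_(i < d) K ^ i * f i = \sum_(i < d) K ^ i * g i)%N -> f =1 g.
Proof.
elim: d f g => [|d IH] f g hf hg.
  by move=> _ i; case: i.
rewrite !big_ord_recl /= !expn0 !mul1n.
have e (h : 'I_d.+1 -> nat) : (\sum_(i < d) K ^ (bump 0 i) * h (lift ord0 i) =
   (\sum_(i < d) K ^ i * h (lift ord0 i)) * K)%N.
  rewrite big_distrl /=; apply: eq_bigr => i _.
  by rewrite /bump leq0n add1n expnS [RHS]mulnC mulnA.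
rewrite !e => heq.
have K0 : (0 < K)%N by apply: leq_ltn_trans (hf ord0).
have h0 : f ord0 = g ord0.
  have := congr1 (fun x => x %% K)%N heq.
  by rewrite /= !(addnC (f _)) !(addnC (g _)) !modnMDl !modn_small.
have h1 : forall i : 'I_d, f (lift ord0 i) = g (lift ord0 i).
  apply: IH => [i|i|]; [exact: hf|exact: hg|].
  have := congr1 (fun x => x %/ K)%N heq.
  by rewrite /= !(addnC (f _)) !(addnC (g _)) !divnMDl // !divn_small // !addn0.
move=> i; case: (unliftP ord0 i) => [j ->|->] //.
Qed.

Lemma mpoly_nonroot (C : numClosedFieldType) d (P : {mpoly C[d]}) :
  P != 0 -> exists w, P.@[w] != 0.
Proof.
move=> P0.
pose K := msize P.
pose enc (m : 'X_{1..d}) := (\sum_(i < d) K ^ i * m i)%N.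
pose Phi := \sum_(m <- msupp P) P@_m *: 'X^(enc m).
have PhiE x : Phi.[x] = P.@[fun i => x ^+ (K ^ i)].
  rewrite mevalE /Phi horner_sum; apply: eq_bigr => m _.
  rewrite hornerZ hornerXn; congr (_ * _).
  rewrite /enc -prodrXr; apply: eq_bigr => i _.
  by rewrite exprM.
have lt m i : m \in msupp P -> (m i < K)%N.
  move=> /msize_mdeg_lt; apply: leq_trans; rewrite ltnS mdegE.
  by rewrite (bigD1 i) //= leq_addr.
have [m0 m0in] : exists m0, m0 \in msupp P.
  case E: (msupp P) => [|m s]; last by exists m; rewrite inE eqxx.
  by move/eqP: E; rewrite msupp_eq0 (negbTE P0).
have Phi0 : Phi != 0.
  apply/eqP => HP; have := congr1 (fun q : {poly C} => q`_(enc m0)) HP; rewrite /=.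
  rewrite coef0 coef_sum (bigD1_seq m0) ?msupp_uniq //= coefZ coefXn eqxx mulr1.
  rewrite big_seq_cond big1 ?addr0.
    by move/eqP; rewrite mcoeff_eq0 m0in.
  move=> m /andP[min mm0]; rewrite coefZ coefXn.
  case: eqP => [he|]; last by rewrite mulr0.
  exfalso; move/negP: mm0; apply; apply/eqP/mnmP.
  apply: (@enc_inj K d) => [i|i|]; last by [].
  - exact: lt.
  - exact: lt.
have [x hx] := closed_nonrootP _ Phi0.
exists (fun i => x ^+ (K ^ i)); by rewrite -PhiE.
Qed.
Lemma disk_ok (C : numClosedFieldType) (t z : C) :
  0 < t -> t * `|z| ^+ 2 < 2 * 'Re z -> `|1 - t * z| < 1.
Proof.
move=> t0 h.
have tr : t \is Num.real by apply: gtr0_real.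
have e2 : z + z^* = 2 * 'Re z.
  by rewrite ReE mulrC -mulrA mulVf ?mulr1 // pnatr_eq0.
have E : `|1 - t * z| ^+ 2 = 1 - t * (2 * 'Re z - t * `|z| ^+ 2).
  have cB (x y : C) : (x - y)^* = x^* - y^* by exact: rmorphB.
  have cM (x y : C) : (x * y)^* = x^* * y^* by exact: rmorphM.
  rewrite (normCK (1 - t * z)) cB cM conjC1 (conj_Creal tr) -e2 normCK.
  ring.
rewrite -(ltr_pXn2r (_ : (0 < 2)%N)) ?nnegrE // expr1n E.
by rewrite gtrDl oppr_lt0 mulr_gt0 // subr_gt0.
Qed.
Lemma le_sum_norm (C : numClosedFieldType) d (f : 'I_d -> C) i :
  `|f i| <= \sum_j `|f j|.
Proof. by rewrite (bigD1 i) //= lerDl sumr_ge0. Qed.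
Arguments le_sum_norm {C d} f i.

Lemma region (C : numClosedFieldType) d (zeta v : 'I_d -> C) :
  (forall i, 0 < 'Re (zeta i)) ->
  exists rho delta : C, [/\ 0 < rho, 0 < delta &
    forall r t, `|r| < rho -> 0 < t -> t <= delta ->
      forall i, 2 * 'Re (zeta i + r * v i) - t * `|zeta i + r * v i| ^+ 2 > 0].
Proof.
move=> hRe.
pose a := (1 + \sum_i ('Re (zeta i))^-1)^-1.
pose Zb := \sum_i `|zeta i|.
pose Vb := 1 + \sum_i `|v i|.
have S0 : 0 <= \sum_i ('Re (zeta i))^-1 by apply: sumr_ge0 => i _; rewrite invr_ge0 ltW.
have Vb0 : 0 < Vb by rewrite ltr_wpDr // sumr_ge0.
have Zb0 : 0 <= Zb by rewrite sumr_ge0.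
have a0 : 0 < a by rewrite invr_gt0 ltr_wpDr.
have aRe i : a <= 'Re (zeta i).
  rewrite -[a]mul1r ler_pdivrMr ?ltr_wpDr //.
  have := hRe i => hi.
  have Hinv : ('Re (zeta i))^-1 <= 1 + \sum_i ('Re (zeta i))^-1.
    rewrite (bigD1 i) //= addrCA lerDl addr_ge0 // sumr_ge0 // => j _.
    by rewrite invr_ge0 ltW.
  by have := ler_wpM2l (ltW hi) Hinv; rewrite mulfV ?lt0r_neq0.
pose rho := a / (2 * Vb).
pose delta := a / (1 + (Zb + a) ^+ 2).
exists rho, delta; split.
- by rewrite divr_gt0 // mulr_gt0.
- by rewrite divr_gt0 // ltr_wpDr // exprn_ge0 // addr_ge0 // ltW.
move=> r t hr t0 tdel i.
have hrv : `|r * v i| <= a / 2.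
  have hv : `|v i| <= Vb by apply: le_trans (le_sum_norm v i) _; rewrite lerDr.
  rewrite normrM.
  apply: le_trans (ler_pM (normr_ge0 _) (normr_ge0 _) (ltW hr) hv) _.
  have -> : rho * Vb = a / 2.
    rewrite /rho; field.
    by rewrite lt0r_neq0 //= pnatr_eq0.
  by [].
have hRe2 : a <= 2 * 'Re (zeta i + r * v i).
  rewrite raddfD /= mulrDr.
  have h1 : - (a / 2) <= 'Re (r * v i).
    apply: real_lerNnormlW; first exact: Creal_Re.
    by apply: le_trans (leif_normC_Re_Creal _) hrv.
  have h2 : a = 2 * a + 2 * (- (a / 2)) by field.
  rewrite {1}h2; apply: lerD; first by rewrite ler_wpM2l ?ler0n.
  by rewrite ler_wpM2l ?ler0n.
have hn : `|zeta i + r * v i| <= Zb + a.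
  have ha : a / 2 <= a by rewrite ler_pdivrMr ?ltr0n // ler_peMr ?ltW // ltr1n.
  apply: le_trans (ler_normD _ _) _.
  apply: lerD; first exact: le_sum_norm.
  exact: le_trans hrv ha.
have hn2 : `|zeta i + r * v i| ^+ 2 <= (Zb + a) ^+ 2.
  by rewrite ler_pXn2r ?nnegrE ?(addr_ge0 Zb0 (ltW a0)).
rewrite subr_gt0; apply: lt_le_trans hRe2.
apply: le_lt_trans (ler_wpM2l (ltW t0) hn2) _.
apply: le_lt_trans (ler_wpM2r (exprn_ge0 _ (addr_ge0 Zb0 (ltW a0))) tdel) _.
have P0 : 0 < 1 + (Zb + a) ^+ 2 by rewrite ltr_wpDr // exprn_ge0 // addr_ge0 // ltW.
rewrite /delta mulrAC ltr_pdivrMr //.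
by rewrite ltr_pM2l // ltrDr.
Qed.
Lemma small_t (C : numFieldType) (K : C) : 0 <= K ->
  [/\ 0 < (1 + K)^-1, (1 + K)^-1 <= 1 &
   forall X, 0 <= X -> X <= K -> (1 + K)^-1 * X < 1].
Proof.
move=> K0; have K1 : 0 < 1 + K by rewrite ltr_wpDr.
split; first by rewrite invr_gt0.
  by rewrite invf_le1 // lerDl.
move=> X X0 XK; rewrite mulrC ltr_pdivrMr // mul1r.
by apply: le_lt_trans XK _; rewrite ltrDr.
Qed.

Lemma final_contra (C : numFieldType) (X c t E B E0 P h0 hk : C) :
  0 < X -> 0 < P -> 0 <= t -> 0 <= B ->
  t * (2 * E) < c -> t * (2 * B * E0) < c * P ->
  X * c - X * t * E <= hk -> hk * P <= B * h0 -> h0 <= X * t * E0 -> False.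
Proof.
move=> X0 P0 t0 B0 h1 h2 hk1 hk2 h01.
have a1 : (X * c - X * t * E) * P <= B * (X * t * E0).
  apply: le_trans (ler_wpM2r (ltW P0) hk1) _.
  by apply: le_trans hk2 _; apply: ler_wpM2l.
have a2 : X * c * P < 2 * ((X * c - X * t * E) * P).
  rewrite -subr_gt0.
  have -> : 2 * ((X * c - X * t * E) * P) - X * c * P = X * P * (c - t * (2 * E)) by ring.
  by rewrite mulr_gt0 ?mulr_gt0 // subr_gt0.
have a3 : 2 * (B * (X * t * E0)) < X * c * P.
  have -> : 2 * (B * (X * t * E0)) = X * (t * (2 * B * E0)) by ring.
  by rewrite -[X in _ < X]mulrA ltr_pM2l.
have a4 : 2 * ((X * c - X * t * E) * P) <= 2 * (B * (X * t * E0)).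
  by rewrite ler_wpM2l ?ler0n.
have := lt_le_trans a2 a4; have := a3.
move=> x y; have := lt_trans y x; by rewrite ltxx.
Qed.

Arguments mpoly_nonroot {C d P}.
Arguments root_bound {C} h {rho}.
Arguments region {C d} zeta v.
Arguments small_t {C K}.
Arguments final_contra {C X c t E B E0 P h0 hk}.
Arguments disk_ok {C t z}.
Lemma core (C : numClosedFieldType) d M (q : {mpoly C[d]}) :
  (forall z : 'I_d -> C, (forall i, `|1 - z i| < 1) -> q.@[z] != 0) ->
  (forall m, m \in msupp q -> (M <= mdeg m)%N) ->
  pihomog mdeg M q != 0 ->
  forall zeta : 'I_d -> C, (forall i, 0 < 'Re (zeta i)) ->
    (pihomog mdeg M q).@[zeta] != 0.
Proof.
move=> hq hsupp hPM zeta hRe; apply/negP => /eqP hz.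
have [w hw] := mpoly_nonroot hPM.
pose v i := w i - zeta i.
pose Pm (m : 'X_{1..d}) : {poly C} :=
  \prod_(i < d) ((zeta i)%:P + (v i)%:P * 'X) ^+ (m i).
have PmE m s : (Pm m).[s] = \prod_(i < d) (zeta i + s * v i) ^+ (m i).
  rewrite /Pm horner_prod; apply: eq_bigr => i _.
  by rewrite horner_exp hornerD hornerC hornerCM hornerX mulrC.
pose S := msupp q.
pose G := \sum_(m <- S | mdeg m == M) q@_m *: Pm m.
have PME z : (pihomog mdeg M q).@[z] =
    \sum_(m <- S | mdeg m == M) q@_m * \prod_i z i ^+ m i.
  by rewrite pihomogE raddf_sum; apply: eq_bigr => m _; rewrite /= mevalZ mevalX.
have GE s : G.[s] = (pihomog mdeg M q).@[fun i => zeta i + s * v i].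
  by rewrite PME horner_sum; apply: eq_bigr => m _; rewrite hornerZ PmE.
have G0 : G`_0 = 0.
  by rewrite -horner_coef0 GE -[RHS]hz; apply: meval_eq => i /=; rewrite mul0r addr0.
have Gn0 : G != 0.
  apply/eqP => G0'; move: hw; have := GE 1; rewrite G0' horner0.
  have -> : (pihomog mdeg M q).@[fun i => zeta i + 1 * v i] = (pihomog mdeg M q).@[w].
    by apply: meval_eq => i /=; rewrite mul1r /v addrC subrK.
  by move=> <-; rewrite eqxx.
have [k0 hk0] : exists k, G`_k != 0.
  by exists (size G).-1; rewrite -lead_coefE lead_coef_eq0.
pose H (t : C) := \sum_(m <- S) (q@_m * t ^+ mdeg m) *: Pm m.
have HE t s : (H t).[s] = q.@[fun i => t * (zeta i + s * v i)].
  rewrite mevalE horner_sum; apply: eq_bigr => m _.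
  rewrite hornerZ PmE -mulrA; congr (_ * _).
  rewrite mdegE -prodrXr -big_split /=; apply: eq_bigr => i _.
  by rewrite exprMn.
pose E k := \sum_(m <- S | mdeg m != M) `|q@_m| * `|(Pm m)`_k|.
have E0 k : 0 <= E k by apply: sumr_ge0 => m _; rewrite mulr_ge0.
have Hcoef t k : 0 < t -> t <= 1 ->
    `|(H t)`_k - t ^+ M * G`_k| <= t ^+ M.+1 * E k.
  move=> t0 t1.
  rewrite /H coef_sum (bigID (fun m => mdeg m == M)) /= /G coef_sum mulr_sumr.
  have -> : \sum_(m <- S | mdeg m == M) ((q@_m * t ^+ mdeg m) *: Pm m)`_k
          = \sum_(m <- S | mdeg m == M) t ^+ M * (q@_m *: Pm m)`_k.
    by apply: eq_bigr => m /eqP hm; rewrite !coefZ hm; ring.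
  rewrite addrAC subrr add0r mulr_sumr.
  apply: le_trans (ler_norm_sum _ _ _) _.
  rewrite big_seq_cond [X in _ <= X]big_seq_cond; apply: ler_sum => m /andP[mS mM].
  have hm : (M.+1 <= mdeg m)%N by rewrite ltn_neqAle eq_sym mM hsupp.
  rewrite coefZ !normrM normrX (ger0_norm (ltW t0)).
  have tt : t ^+ mdeg m <= t ^+ M.+1 := ler_wiXn2l (ltW t0) t1 hm.
  have := ler_wpM2r (mulr_ge0 (normr_ge0 q@_m) (normr_ge0 (Pm m)`_k)) tt.
  by have -> : `|q@_m| * t ^+ mdeg m * `|(Pm m)`_k| = t ^+ mdeg m * (`|q@_m| * `|(Pm m)`_k|) by ring.

have [rho [delta [rho0 delta0 hreg]]] := region zeta v hRe.
pose N := (\max_(m <- S) size (Pm m))%N.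
have sizeH t : (size (H t) <= N)%N.
  apply: leq_trans (size_sum _ _ _) _; apply/bigmax_leqP_seq => m mS _.
  apply: leq_trans (size_scale_leq _ _) _; exact: leq_bigmax_seq.
pose c := `|G`_k0|.
have c0 : 0 < c by rewrite normr_gt0.
pose B : C := 2 ^+ N.
have B0 : 0 <= B by rewrite exprn_ge0 ?ler0n.
have Pk0 : 0 < rho ^+ k0 by rewrite exprn_gt0.
pose X1 := delta^-1.
pose X2 := 2 * E k0 / c.
pose X3 := 2 * B * E 0 / (c * rho ^+ k0).
have X10 : 0 <= X1 by rewrite invr_ge0 ltW.
have X20 : 0 <= X2 by apply: divr_ge0; [rewrite !mulr_ge0 ?ler0n | rewrite ltW].
have X30 : 0 <= X3 by apply: divr_ge0; [rewrite !mulr_ge0 ?ler0n | rewrite ltW ?mulr_gt0].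
pose t := (1 + (X1 + X2 + X3))^-1.
have [t0 t1 tX] : [/\ 0 < t, t <= 1 & forall X, 0 <= X -> X <= X1 + X2 + X3 -> t * X < 1]
  := small_t (addr_ge0 (addr_ge0 X10 X20) X30).
have tdel : t < delta.
  have hX : X1 <= X1 + X2 + X3 by rewrite -addrA lerDl addr_ge0.
  have := tX X1 X10 hX.
  by rewrite ltr_pdivrMr // mul1r.
have h1 : t * (2 * E k0) < c.
  have hX : X2 <= X1 + X2 + X3 by rewrite addrAC lerDr addr_ge0.
  have := tX X2 X20 hX.
  by rewrite mulrA ltr_pdivrMr // mul1r.
have h2 : t * (2 * B * E 0) < c * rho ^+ k0.
  have hX : X3 <= X1 + X2 + X3 by rewrite lerDr addr_ge0.
  have := tX X3 X30 hX.
  by rewrite mulrA ltr_pdivrMr ?mulr_gt0 // mul1r.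
have hroots : forall r, root (H t) r -> rho <= `|r|.
  move=> r hr; case: (boolP (rho <= `|r|)) => // hn; exfalso.
  have hrr : `|r| < rho by rewrite real_ltNge ?normr_real ?gtr0_real.
  have hdisk : forall i, `|1 - t * (zeta i + r * v i)| < 1.
    move=> i; apply: (disk_ok t0); rewrite -subr_gt0.
    exact: hreg r t hrr t0 (ltW tdel) i.
  by have := hq _ hdisk; rewrite -HE (rootP hr) eqxx.
have LA := root_bound (H t) rho0 hroots k0.
have LB : `|(H t)`_k0| * rho ^+ k0 <= B * `|(H t)`_0|.
  apply: le_trans LA _; apply: ler_wpM2r => //.
  by apply: ler_weXn2l; [rewrite ler1n | exact: sizeH].
have H0 : `|(H t)`_0| <= t ^+ M * t * E 0.
  by have := Hcoef t 0%N t0 t1; rewrite G0 mulr0 subr0 exprSr.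
have Hk : t ^+ M * c - t ^+ M * t * E k0 <= `|(H t)`_k0|.
  have := Hcoef t k0 t0 t1; rewrite exprSr => hh.
  have := lerB_dist (t ^+ M * G`_k0) ((H t)`_k0); rewrite distrC => hh2.
  rewrite normrM normrX (ger0_norm (ltW t0)) in hh2.
  rewrite lerBlDr addrC -lerBlDr; exact: le_trans hh2 hh.
exact: final_contra (exprn_gt0 _ t0) Pk0 (ltW t0) B0 h1 h2 Hk LB H0.
Qed.

Theorem theorem14p1 (d n M : nat) (p : {mpoly CC[d]}) :
  (msize p).-1 = n ->
  (forall z : 'I_d -> CC, in_polydisk z -> p.@[z] != 0) ->
  (forall m, m \in msupp (shift_u p) -> (M <= mdeg m)%N) ->
  hpart M (shift_u p) != 0 ->
  forall zeta : 'I_d -> CC, in_right_halfplane zeta ->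
    (hpart M (shift_u p)).@[zeta] != 0.
Proof.
move=> _ hpol hsupp hPM zeta hRe.
rewrite /hpart in hPM *; apply: core => //.
- move=> z hz; rewrite /shift_u comp_mpoly_meval; apply: hpol => i /=.
  by rewrite tnth_mktuple mevalB meval1 mevalXU; exact: hz.
- move=> i; rewrite -complexRe ltcR; exact: hRe i.
Qed.
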